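(* Let $S=S^{\top}\in\mathbb{R}^{n\times n}$ be a nonnegative irreducible symmetric matrix and $K=-K^{\top}\in\mathbb{R}^{n\times n}$ a nonsingular skew-symmetric matrix such that $A=S+K\ge 0$ (entrywise). Then $n$ is even and $t\mapsto r\big((1-t)A+tA^{\top}\big)$, $t\in[0,1]$, is not constant.
   Context: $r(M)$ denotes the spectral radius of $M$. *)

(* Defs.v *)
From HB Require Import structures.
From mathcomp Require Import all_boot all_order all_algebra.
From mathcomp Require Import complex.
From mathcomp Require Import classical_sets reals.
Set Implicit Arguments. Unset Strict Implicit. Unset Printing Implicit Defensive.
Import Order.TTheory GRing.Theory Num.Theory.
Local Open Scope ring_scope.
Local Open Scope classical_set_scope.

Definition cspectrum (R : realType) (n : nat) (M : 'M[R]_n) : set R[i] :=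
  [set z | eigenvalue (map_mx (fun x : R => x%:C%C) M) z].

(* Spectral radius r(M) = max { |z| : z complex eigenvalue of M }
   (the set is finite, so its supremum is its maximum). *)
Definition spectral_radius (R : realType) (n : nat) (M : 'M[R]_n) : R :=
  sup [set ComplexField.Normc.normc z | z in cspectrum M].

Definition nonneg_mx (R : realType) (m n : nat) (M : 'M[R]_(m, n)) : Prop :=
  forall i j, 0 <= M i j.

(* Irreducible matrix: M is not permutation-similar to a block upper triangular
   matrix with nontrivial diagonal blocks; equivalently, for every nonempty
   proper index set I there are i in I, j not in I with M i j <> 0. *)
Definition irreducible_mx (R : realType) (n : nat) (M : 'M[R]_n) : Prop :=
  forall I : {set 'I_n}, I != finset.set0 -> I != [set: 'I_n]%SET ->
    exists i j, [/\ i \in I, j \notin I & M i j != 0].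

(* Main.v *)
From HB Require Import structures.
From mathcomp Require Import all_boot all_order all_algebra.
From mathcomp Require Import complex.
From mathcomp Require Import classical_sets reals.
From mathcomp Require Import sesquilinear spectral ring lra.
Require Import Defs.
Import Order.TTheory GRing.Theory Num.Theory Num.Def.
Set Implicit Arguments. Unset Strict Implicit. Unset Printing Implicit Defensive.
Local Open Scope ring_scope.
Local Open Scope sesquilinear_scope.
Local Notation cmx M := (map_mx (fun x => x%:C%C) M).
Section T.
Variable R : realType.
Local Notation C := R[i].

Lemma spec_top (n : nat) (S : 'M[R]_n) : (0 < n)%N -> S^T = S ->
  exists l : R, eigenvalue (cmx S) l%:C%C /\
   forall x : 'rV[C]_n,
     (x *m cmx S *m x^t*) 0 0 <= l%:C%C * (x *m x^t*) 0 0 /\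
     ((x *m cmx S *m x^t*) 0 0 = l%:C%C * (x *m x^t*) 0 0 -> x *m cmx S = l%:C%C *: x).
Proof.
move=> n0 Ssym.
set Sc := cmx S.
have Sh : Sc \is hermsymmx.
  apply: realsym_hermsym.
    apply/is_hermitianmxP; rewrite expr0 scale1r; apply/matrixP => i j; rewrite !mxE -[in LHS]Ssym mxE //.
  by apply/mxOverP => i j; rewrite mxE; apply/complex_realP; eexists.
have /orthomx_spectralP Sdec := hermitian_normalmx Sh.
have dreal := hermitian_spectral_diag_real Sh.
set P := spectralmx Sc in Sdec; set d := spectral_diag Sc in Sdec dreal.
have Pu : P \is unitarymx := spectral_unitarymx Sc.
have PtU : P^t* \is unitarymx by rewrite trmxC_unitary.
have PPt : P *m P^t* = 1%:M by apply/unitarymxP.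
have PtP : P^t* *m P = 1%:M by have := unitarymxP PtU; rewrite trmxCK.
rewrite invmx_unitary // in Sdec.
have dR : forall j, d 0 j = (complex.Re (d 0 j))%:C%C.
  by move=> j; rewrite RRe_real //; apply: (mxOverP dreal).
pose k := [arg max_(j > Ordinal n0) complex.Re (d 0 j)]%O.
have dle : forall j, d 0 j <= (complex.Re (d 0 k))%:C%C.
  move=> j; rewrite dR lecR /k; case: arg_maxP => //= i _; exact.
exists (complex.Re (d 0 k)); split.
  apply/eigenvalueP; exists (row k P).
    rewrite -row_mul Sdec !mulmxA PPt mul1mx mul_diag_mx.
    apply/rowP => j; rewrite !mxE -dR //.
  apply/eqP => /(congr1 (fun M => M *m P^t*)); rewrite /= -row_mul PPt mul0mx.
  move/rowP/(_ k); rewrite !mxE eqxx /=; apply/eqP; exact: oner_neq0.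
move=> x; set l := (complex.Re (d 0 k))%:C%C.
pose y := x *m P^t*.
have yt : y^t* = P *m x^t* by rewrite /y trmx_mul map_mxM trmxCK.
have q1 : x *m Sc *m x^t* = y *m diag_mx d *m y^t*.
  by rewrite yt Sdec /y !mulmxA.
have q2 : x *m x^t* = y *m y^t*.
  by rewrite yt /y !mulmxA -[x *m _ *m P]mulmxA PtP mulmx1.
have e1 : (y *m diag_mx d *m y^t*) 0 0 = \sum_j d 0 j * (y 0 j * (y 0 j)^*).
  rewrite mul_mx_diag mxE; apply: eq_bigr => j _; rewrite !mxE; ring.
have e2 : (y *m y^t*) 0 0 = \sum_j (y 0 j * (y 0 j)^*).
  by rewrite mxE; apply: eq_bigr => j _; rewrite !mxE.
have w0 : forall j, 0 <= y 0 j * (y 0 j)^* by move=> j; exact: mul_conjC_ge0.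
rewrite q1 q2 e1 e2 mulr_sumr; split.
  by apply: ler_sum => j _; apply: ler_wpM2r.
move=> /eqP; rewrite eq_sym -subr_eq0 -sumrB => /eqP Hs.
have Hj := psumr_eq0P _ Hs.
have {}Hj : forall i, true -> _ := Hj (fun i _ => ltac:(by rewrite subr_ge0; apply: ler_wpM2r)).
have yd : forall j, y 0 j * d 0 j = l * y 0 j.
  move=> j; have /eqP := Hj j isT; rewrite -mulrBl mulf_eq0 => /orP[].
    by rewrite subr_eq0 => /eqP ->; rewrite mulrC.
  by rewrite mul_conjC_eq0 => /eqP ->; rewrite mulr0 mul0r.
have -> : x = y *m P by rewrite /y -mulmxA PtP mulmx1.
rewrite Sdec !mulmxA -(mulmxA y P) PPt mulmx1 mul_mx_diag scalemxAl; congr (_ *m _).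
by apply/rowP => j; move: (yd j); rewrite !mxE => ->.
Qed.

Definition spec_prop (n : nat) (S : 'M[R]_n) (l : R) :=
  forall x : 'rV[C]_n,
     (x *m cmx S *m x^t*) 0 0 <= l%:C%C * (x *m x^t*) 0 0 /\
     ((x *m cmx S *m x^t*) 0 0 = l%:C%C * (x *m x^t*) 0 0 -> x *m cmx S = l%:C%C *: x).

Lemma perron (n : nat) (S K : 'M[R]_n) (l : R) (z : C) :
  S^T = S -> nonneg_mx S -> irreducible_mx S -> K^T = - K ->
  nonneg_mx (S + K) -> spec_prop S l -> eigenvalue (cmx (S + K)) z ->
  ComplexField.Normc.normc z <= l /\ (K \in unitmx -> ComplexField.Normc.normc z < l).
Proof.
move=> Ssym S0 Sirr Kskew A0 Hl /eigenvalueP [v Hv vnz].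
set A := S + K in A0 Hv.
pose x := map_mx (fun c : C => `|c|) v.
have xc : x^t* = x^T.
  by apply/matrixP => i j; rewrite !mxE conj_normC.
have x0 : forall j, 0 <= x 0 j by move=> j; rewrite mxE normr_ge0.
have cM : forall (M : 'M[R]_n) i j, cmx M i j = (M i j)%:C%C by move=> M i j; rewrite mxE.
have st1 : forall j, `|z| * x 0 j <= \sum_i x 0 i * (A i j)%:C%C.
  move=> j; have := congr1 (fun M : 'rV[C]_n => M 0 j) Hv; rewrite /= !mxE => Hj.
  rewrite -normrM -Hj; apply: le_trans (ler_norm_sum _ _ _) _.
  apply: ler_sum => i _; rewrite !mxE normrM; apply: ler_wpM2l => //.
  have h0 : 0 <= (S i j + K i j)%:C%C.
    have := A0 i j; rewrite mxE => h0.
    by rewrite ler0c.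
  by rewrite ger0_norm.
have qE : forall M : 'M[R]_n, (x *m cmx M *m x^t*) 0 0 = \sum_j (\sum_i x 0 i * (M i j)%:C%C) * x 0 j.
  move=> M; rewrite xc mxE; apply: eq_bigr => j _; congr (_ * _); last by rewrite mxE.
  by rewrite mxE; apply: eq_bigr => i _; congr (_ * _); rewrite mxE.
have qK : x *m cmx K *m x^t* = 0.
  have h : (x *m cmx K *m x^t*)^T = - (x *m cmx K *m x^t*).
    by rewrite xc !trmx_mul trmxK map_trmx Kskew map_mxN mulNmx mulmxN mulmxA.
  have h2 : (x *m cmx K *m x^t*)^T = x *m cmx K *m x^t*.
    by apply/matrixP => i j; rewrite !ord1 mxE.
  set m := x *m cmx K *m x^t* in h h2 *.
  have hm : m = - m by rewrite -{1}h2 h.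
  have e : m 0 0 = - m 0 0 by rewrite {1}hm mxE.
  apply/matrixP=> i j; rewrite !ord1 [in RHS]mxE; apply/eqP.
  have : m 0 0 *+ 2 == 0 by rewrite mulr2n {2}e addrN.
  by rewrite mulrn_eq0.
have qA : (x *m cmx A *m x^t*) 0 0 = (x *m cmx S *m x^t*) 0 0.
  by rewrite /A map_mxD mulmxDr mulmxDl qK addr0.
have sE : (x *m x^t*) 0 0 = \sum_j x 0 j * x 0 j.
  by rewrite xc mxE; apply: eq_bigr => j _; rewrite !mxE.
have xnz : x != 0.
  apply/eqP => /matrixP H; move/eqP: vnz; apply; apply/matrixP => i0 j0.
  by have := H i0 j0; rewrite !mxE => /eqP; rewrite normr_eq0 => /eqP.
have s0 : 0 < (x *m x^t*) 0 0.
  rewrite sE lt_def sumr_ge0 ?andbT; last by move=> j _; exact: mulr_ge0.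
  apply/eqP => /(psumr_eq0P (fun j _ => mulr_ge0 (x0 j) (x0 j))) H.
  apply: (negP xnz); apply/eqP/matrixP => i j; rewrite ord1 [in RHS]mxE.
  by have /eqP := H j isT; rewrite mulf_eq0 orbb => /eqP.
have Hz : `|z| * (x *m x^t*) 0 0 <= (x *m cmx A *m x^t*) 0 0.
  rewrite sE qE mulr_sumr; apply: ler_sum => j _; rewrite mulrA.
  by apply: ler_wpM2r.
have HS := Hl x.
have nz : `|z| = (ComplexField.Normc.normc z)%:C%C by [].
split.
  rewrite -lecR -nz -(ler_pM2r s0); apply: le_trans Hz _; rewrite qA; exact: HS.1.
move=> Ku; rewrite ltNge; apply/negP; rewrite -lecR -nz => hlz.
have eqS : (x *m cmx S *m x^t*) 0 0 = l%:C%C * (x *m x^t*) 0 0.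
  apply/le_anti; rewrite HS.1 /=; apply: le_trans (ler_wpM2r (ltW s0) hlz) _.
  by rewrite -qA.
have xS := HS.2 eqS.
have ez : `|z| = l%:C%C.
  apply/le_anti; rewrite hlz andbT -(ler_pM2r s0); apply: le_trans Hz _.
  by rewrite qA eqS.
have colS : forall j, \sum_i x 0 i * (S i j)%:C%C = l%:C%C * x 0 j.
  move=> j; have := congr1 (fun M : 'rV[C]_n => M 0 j) xS; rewrite /= [in RHS]mxE => <-.
  by rewrite mxE; apply: eq_bigr => i _; congr (_ * _); rewrite mxE.
have tsum : \sum_j ((\sum_i x 0 i * (A i j)%:C%C) - `|z| * x 0 j) * x 0 j = 0.
  under eq_bigr do rewrite mulrBl.
  rewrite sumrB -qE qA eqS sE mulr_sumr -ez.
  by apply/eqP; rewrite subr_eq0; apply/eqP; apply: eq_bigr => j _; rewrite mulrA.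
have tge : forall j, 0 <= ((\sum_i x 0 i * (A i j)%:C%C) - `|z| * x 0 j) * x 0 j.
  by move=> j; rewrite mulr_ge0 // subr_ge0 st1.
have tj := psumr_eq0P (fun j _ => tge j) tsum.
have xpos : forall j, x 0 j != 0.
  move=> j0; apply/negP => /eqP xj0.
  pose I := [set j | x 0 j == 0].
  have I0 : I != finset.set0.
    by apply/eqP => /setP /(_ j0); rewrite !inE xj0 eqxx.
  have IT : I != [set: 'I_n]%SET.
    apply/eqP => /setP HI; apply: (negP xnz); apply/eqP/matrixP => i j.
    by have := HI j; rewrite !inE ord1 => /eqP ->; rewrite mxE.
  have [i [k [iI kI Sik]]] := Sirr I I0 IT.
  move: iI kI; rewrite !inE => /eqP xi0 xk0.
  have Hn : forall q, true -> 0 <= x 0 q * (S q i)%:C%C.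
    by move=> q _; rewrite mulr_ge0 // ler0c.
  have := colS i; rewrite xi0 mulr0 => /(psumr_eq0P Hn) /(_ k isT) /eqP.
  rewrite mulf_eq0 (negPf xk0) /= => /eqP Ski.
  move: Sik; rewrite -Ssym mxE; apply/negP; rewrite negbK; apply/eqP.
  exact: (@complexI R).
have rowA : forall j, \sum_i x 0 i * (A i j)%:C%C = `|z| * x 0 j.
  move=> j; have /eqP := tj j isT; rewrite mulf_eq0 (negPf (xpos j)) orbF subr_eq0.
  by move/eqP.
have xK : x *m cmx K = 0.
  apply/rowP => j; rewrite [in RHS]mxE.
  have -> : (x *m cmx K) 0 j = \sum_i x 0 i * (A i j)%:C%C - \sum_i x 0 i * (S i j)%:C%C.
    rewrite -sumrB mxE; apply: eq_bigr => i _; rewrite -mulrBr; congr (_ * _).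
    by rewrite !mxE raddfD /= addrC addKr.
  by rewrite rowA colS ez subrr.
move/eqP: xK; rewrite mulmx_free_eq0 ?(negPf xnz) // row_free_unit map_unitmx //.
Qed.


Lemma normc_real (a : R) : ComplexField.Normc.normc (a%:C%C) = `|a|.
Proof.
apply: (@complexI R); rewrite -[LHS]/(`|a%:C%C|) normc_def /= expr0n /= addr0.
by rewrite sqrtr_sqr.
Qed.

Lemma finite_bound (n : nat) (M : 'M[R]_n) (l : R) :
  (forall z, eigenvalue (cmx M) z -> ComplexField.Normc.normc z < l) ->
  exists2 mu, mu < l & forall z, eigenvalue (cmx M) z -> ComplexField.Normc.normc z <= mu.
Proof.
move=> H.
have [rs Hrs] := closed_field_poly_normal (char_poly (cmx M)).
exists (\big[Order.max/(l - 1)]_(z <- rs | eigenvalue (cmx M) z) ComplexField.Normc.normc z).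
  by apply: bigmax_lt => //; rewrite gtrDl ltrN10.
move=> z ez; apply: le_bigmax_seq => //.
move: ez; rewrite eigenvalue_root_char Hrs (monicP (char_poly_monic _)) scale1r.
by rewrite root_prod_XsubC.
Qed.

End T.

Theorem corollary3 (R : realType) (n : nat) (S K : 'M[R]_n) :
  (0 < n)%N ->
  S^T = S -> nonneg_mx S -> irreducible_mx S ->
  K^T = - K -> K \in unitmx ->
  nonneg_mx (S + K) ->
  ~~ odd n /\
  exists t1 t2 : R, [/\ 0 <= t1 <= 1, 0 <= t2 <= 1 &
    spectral_radius ((1 - t1) *: (S + K) + t1 *: (S + K)^T)
    != spectral_radius ((1 - t2) *: (S + K) + t2 *: (S + K)^T)].
Proof.
move=> n0 Ssym S0 Sirr Kskew Ku A0; split.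
  have hd : \det K = (-1) ^+ n * \det K by rewrite -detZ scaleN1r -Kskew det_tr.
  apply/negP => on; move: hd; rewrite -signr_odd on expr1 mulN1r => hd.
  have : \det K *+ 2 == 0 by rewrite mulr2n {1}hd addNr.
  by rewrite mulrn_eq0 /= => /eqP d0; move: Ku; rewrite unitmxE d0 unitr0.
have [l [le Hl]] := spec_top n0 Ssym.
have Hl' : spec_prop S l by exact: Hl.
exists 0, (2^-1); split.
- by rewrite lexx ler01.
- apply/andP; split; lra.
have -> : (1 - 0) *: (S + K) + 0 *: (S + K)^T = S + K.
  by rewrite subr0 scale1r scale0r addr0.
have -> : (1 - 2^-1) *: (S + K) + 2^-1 *: (S + K)^T = S.
  apply/matrixP => i j.
  have := congr1 (fun M : 'M[R]_n => M i j) Kskew; rewrite /= !mxE => kij.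
  have := congr1 (fun M : 'M[R]_n => M i j) Ssym; rewrite /= !mxE => sij.
  by rewrite kij sij; field.
have pA : forall z, eigenvalue (cmx (S + K)) z -> ComplexField.Normc.normc z < l.
  by move=> z ez; exact: (perron Ssym S0 Sirr Kskew A0 Hl' ez).2 Ku.
have pS : forall z, eigenvalue (cmx S) z -> ComplexField.Normc.normc z <= l.
  move=> z ez; have K0 : (0 : 'M[R]_n)^T = - 0 by rewrite trmx0 oppr0.
  have A0' : nonneg_mx (S + 0) by rewrite addr0.
  by have := perron Ssym S0 Sirr K0 A0' Hl'; rewrite addr0 => /(_ z ez) [].
have [mu mul mub] := finite_bound pA.
have rA : spectral_radius (S + K) <= mu.
  rewrite /spectral_radius; apply: ge_sup.
    have [z ez] := eigenvalue_closed (cmx (S + K)) n0.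
    by exists (ComplexField.Normc.normc z); exists z.
  by move=> y [z ez <-]; exact: mub.
have rS : l <= spectral_radius S.
  apply: le_trans (ler_norm l) _; rewrite -normc_real.
  apply: ub_le_sup; last by exists (l%:C%C).
  by exists l => y [z ez <-]; exact: pS.
by rewrite lt_eqF //; apply: le_lt_trans rA _; apply: lt_le_trans mul rS.
Qed.
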